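(* Let $q$ be a prime power and $t\ge1$ an integer. In a projective space over $\mathbb{F}_q$, let $\Omega$ be a $(t-2)$-dimensional subspace, $\Gamma$ a plane skew from $\Omega$, $\bar{B}$ a non-trivial minimal blocking set of $\Gamma$, and $K$ the cone with vertex $\Omega$ and base $\bar{B}$. Then every point $P$ of $K$ not contained in $\Omega$ lies on exactly $(q^{t-1}-1)/(q-1)$ lines contained in $K$.
   Context: The cone with vertex $\Omega$ and base $\bar{B}$ is $\bigcup_{P\in\bar B}\langle P,\Omega\rangle$. A blocking set of a plane is a point set meeting every line; minimal means no proper subset does; non-trivial means it does not contain a line. *)

(* Defs.v *)
(* The projective space PG(n-1, F) is modelled through the
   row spaces (mxalgebra) of the vector space 'rV[F]_n.  A projective subspace
   of projective dimension d is a matrix whose row space has rank d+1; a point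
   or a line is represented canonically by the matrix <<X>>%MS of its row space,
   so that distinct points/lines are distinct matrices and can be counted. *)
From HB Require Import structures.
From mathcomp Require Import all_boot all_order all_algebra.
Set Implicit Arguments. Unset Strict Implicit. Unset Printing Implicit Defensive.
Import GRing.Theory.
Local Open Scope ring_scope.

Section Proj.
Variables (F : finFieldType) (n : nat).

Definition is_psub (r : nat) (X : 'M[F]_n) : bool :=
  (<<X>>%MS == X) && (\rank X == r).

Definition is_point (X : 'M[F]_n) : bool := is_psub 1 X.
Definition is_line (X : 'M[F]_n) : bool := is_psub 2 X.

Definition points : {set 'M[F]_n} := [set X | is_point X].

Definition line_in (L : 'M[F]_n) (S : {set 'M[F]_n}) : bool :=
  [forall X : 'M[F]_n, is_point X ==> (X <= L)%MS ==> (X \in S)].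

Definition blocking_set (G : 'M[F]_n) (S : {set 'M[F]_n}) : Prop :=
  (forall X, X \in S -> is_point X /\ (X <= G)%MS) /\
  (forall L : 'M[F]_n, is_line L -> (L <= G)%MS ->
     exists2 X, X \in S & (X <= L)%MS).

Definition minimal_blocking_set (G : 'M[F]_n) (S : {set 'M[F]_n}) : Prop :=
  blocking_set G S /\
  (forall S' : {set 'M[F]_n}, S' \proper S -> ~ blocking_set G S').

Definition nontrivial_bset (G : 'M[F]_n) (S : {set 'M[F]_n}) : Prop :=
  forall L : 'M[F]_n, is_line L -> (L <= G)%MS -> ~~ line_in L S.

Definition cone (Om : 'M[F]_n) (B : {set 'M[F]_n}) : {set 'M[F]_n} :=
  [set X | is_point X && [exists P in B, (X <= Om + P)%MS]].

Definition lines_through_in (X : 'M[F]_n) (S : {set 'M[F]_n}) : {set 'M[F]_n} :=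
  [set L | is_line L && (X <= L)%MS & line_in L S].

End Proj.

(* Main.v *)
Require Import Defs.
From HB Require Import structures.
From mathcomp Require Import all_boot all_order all_algebra zify.
Import GRing.Theory.
Local Open Scope ring_scope.

Section H.
Variables (F : finFieldType) (n : nat).
Implicit Types (A B C : 'M[F]_n).

Lemma sub_rank_eq m1 m2 (A : 'M[F]_(m1, n)) (B : 'M[F]_(m2, n)) :
  (A <= B)%MS -> (\rank B <= \rank A)%N -> (B <= A)%MS.
Proof. by move=> sAB; rewrite (geq_leqif (mxrank_leqif_sup sAB)). Qed.

Lemma rank_skew m1 m2 (A : 'M[F]_(m1, n)) (B : 'M[F]_(m2, n)) :
  (A :&: B)%MS = 0 -> \rank (A + B)%MS = (\rank A + \rank B)%N.
Proof. by move=> h; rewrite -mxrank_sum_cap h mxrank0 addn0. Qed.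

Lemma skew_rank1 m1 m2 (A : 'M[F]_(m1, n)) (B : 'M[F]_(m2, n)) :
  \rank B = 1%N -> ~~ (B <= A)%MS -> (A :&: B)%MS = 0.
Proof.
move=> rB nBA; apply/eqP; rewrite -mxrank_eq0.
have := mxrankS (capmxSr A B); rewrite rB.
case: (ltngtP (\rank (A :&: B)%MS) 1) => //; first by case: (\rank _).
move=> e _; case/negP: nBA.
have : (B <= A :&: B)%MS by apply: sub_rank_eq; [exact: capmxSr | rewrite e rB].
by rewrite sub_capmx => /andP[].
Qed.

Lemma psub_eq r A B : is_psub r A -> is_psub r B -> (A <= B)%MS -> A = B.
Proof.
move=> /andP[/eqP gA /eqP rA] /andP[/eqP gB /eqP rB] sAB.
rewrite -gA -gB; apply: eq_genmx; apply/eqmxP; rewrite sAB.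
by apply: sub_rank_eq => //; rewrite rA rB.
Qed.

Lemma point_gen (v : 'rV[F]_n) : v != 0 -> is_point <<v>>%MS.
Proof. by move=> nz; rewrite /is_point /is_psub genmx_id eqxx mxrank_gen rank_rV nz. Qed.

Lemma exists_nz_row m (A : 'M[F]_(m, n)) : A != 0 -> exists i, row i A != 0.
Proof.
move=> nz; apply/existsP; apply: contraR nz; rewrite negb_exists => /forallP h.
apply/eqP/row_matrixP => i; rewrite row0; exact/eqP/negbNE/h.
Qed.

Lemma card_subs m (A : 'M[F]_(m, n)) :
  #|[set v : 'rV[F]_n | (v <= A)%MS]| = (#|F| ^ \rank A)%N.
Proof.
have ->: [set v : 'rV[F]_n | (v <= A)%MS] = [set u *m row_base A | u in 'rV[F]_(\rank A)].
  apply/setP=> v; rewrite inE -(eq_row_base A).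
  by apply/submxP/imsetP => [[u ->]|[u _ ->]]; exists u.
rewrite card_imset ?card_mx ?mul1n //.
have [B AB1] := row_freeP (row_base_free A); apply: can_inj (mulmx^~ B) _ => v.
by rewrite -mulmxA AB1 mulmx1.
Qed.

Lemma count_ext (S P : 'M[F]_n) (j : nat) : \rank P = j -> (P <= S)%MS ->
  (#|[set L : 'M[F]_n | is_psub j.+1 L && (P <= L)%MS && (L <= S)%MS]|
     * (#|F| ^ j.+1 - #|F| ^ j) = #|F| ^ (\rank S) - #|F| ^ j)%N.
Proof.
move=> rP sPS; set q := #|F|.
set Ls := [set L : 'M[F]_n | _].
have cV : forall m (A : 'M[F]_(m, n)), (P <= A)%MS ->
   #|[set v : 'rV[F]_n | (v <= A)%MS && ~~ (v <= P)%MS]| = (q ^ \rank A - q ^ j)%N.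
  move=> m A sPA.
  have -> : [set v : 'rV[F]_n | (v <= A)%MS && ~~ (v <= P)%MS] =
     [set v : 'rV[F]_n | (v <= A)%MS] :\: [set v : 'rV[F]_n | (v <= P)%MS].
    by apply/setP => v; rewrite !inE andbC.
  rewrite cardsD (setIidPr _) ?card_subs ?rP //.
  by apply/subsetP => v; rewrite !inE => h; exact: submx_trans h sPA.
have rk : forall v : 'rV[F]_n, ~~ (v <= P)%MS -> \rank (P + v)%MS = j.+1.
  move=> v nv; have nz : v != 0 by apply: contraNneq nv => ->; rewrite sub0mx.
  by rewrite rank_skew ?skew_rank1 ?rank_rV ?nz // rP addn1.
have key : forall L, L \in Ls -> forall v : 'rV[F]_n,
   ((v <= S)%MS && ~~ (v <= P)%MS) && (<<(P + v)%MS>>%MS == L) = (v <= L)%MS && ~~ (v <= P)%MS.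
  move=> L; rewrite inE => /andP[/andP[pL sPL] sLS] v.
  case nv: (v <= P)%MS; rewrite ?andbF //= !andbT.
  apply/idP/idP.
    by case/andP=> _ /eqP <-; rewrite genmxE addsmxSr.
  move=> vL; rewrite (submx_trans vL sLS) /=; apply/eqP.
  apply: (psub_eq _ _ _ _ pL); first by rewrite /is_psub genmx_id eqxx mxrank_gen rk ?nv ?eqxx.
  by rewrite genmxE addsmx_sub sPL vL.
rewrite -(cV _ S sPS) -[X in _ = X]sum1_card.
rewrite (partition_big (fun v : 'rV[F]_n => <<(P + v)%MS>>%MS) (mem Ls)) /=; last first.
  move=> v; rewrite inE => /andP[vS nv]; rewrite inE /is_psub genmx_id eqxx mxrank_gen rk ?nv //=.
  by rewrite eqxx !genmxE addsmxSl addsmx_sub sPS vS.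
rewrite -sum_nat_const; apply: eq_bigr => L LL.
move: (LL); rewrite inE => /andP[/andP[/andP[_ /eqP rL] sPL] _].
rewrite -rL -(cV _ L sPL).
rewrite sum1_card; apply: eq_card => v; rewrite [in RHS]unfold_in /= !inE; symmetry; exact: key.
Qed.

Lemma geom (Om Gam : 'M[F]_n) (B : {set 'M[F]_n})
  (hGam : \rank Gam = 3%N) (hskew : (Om :&: Gam)%MS = 0)
  (hBp : forall X, X \in B -> is_point X /\ (X <= Gam)%MS)
  (hBnt : nontrivial_bset Gam B) (P Q L : 'M[F]_n)
  (pP : is_point P) (nPO : ~~ (P <= Om)%MS) (QB : Q \in B)
  (sPOQ : (P <= Om + Q)%MS) (lL : is_line L) (sPL : (P <= L)%MS)
  (inL : line_in L (cone Om B)) : (L <= Om + Q)%MS.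
Proof.
set r := \rank Om.
have ptK : forall v : 'rV[F]_n, v != 0 -> (v <= L)%MS ->
    exists2 R, R \in B & (<<v>> <= Om + R)%MS.
  move=> v nz vL; have := forallP inL <<v>>%MS.
  rewrite point_gen // genmxE vL /= inE => /andP[_ /existsP[R /andP[RB sR]]].
  by exists R.
move: (lL) => /andP[_ /eqP rL]; move: (pP) => /andP[_ /eqP rP].
case: (eqVneq (L :&: Om)%MS 0) => hLO; last first.
  have rLO : (1 <= \rank (L :&: Om))%N by rewrite lt0n mxrank_eq0.
  have POm : (Om :&: P)%MS = 0 by apply: skew_rank1.
  have sL : (L <= (L :&: Om) + P)%MS.
    apply: sub_rank_eq; first by rewrite addsmx_sub capmxSl sPL.
    rewrite rank_skew ?rL ?rP; first by rewrite addn1.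
    apply/eqP; rewrite -submx0 -POm capmxS ?capmxSr //.
  apply: submx_trans sL _; rewrite addsmx_sub sPOQ andbT.
  exact: submx_trans (capmxSr _ _) (addsmxSl _ _).
exfalso.
have sLOG : (L <= Om + Gam)%MS.
  apply/row_subP => i; case: (eqVneq (row i L) 0) => [->|nz]; first by rewrite sub0mx.
  have [R RB sR] := ptK _ nz (row_sub i L); have [_ sRG] := hBp R RB.
  apply: submx_trans (submx_trans _ sR) (addsmxS (submx_refl _) sRG).
  by rewrite genmxE.
have OL0 : (Om :&: L)%MS = 0 by rewrite capmxC.
set W := (Om + L)%MS.
have rW : \rank W = (r + 2)%N by rewrite /W rank_skew // rL.
have rOG : \rank (Om + Gam)%MS = (r + 3)%N by rewrite rank_skew // hGam.
set M := (W :&: Gam)%MS.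
have OM0 : (Om :&: M)%MS = 0.
  by apply/eqP; rewrite -submx0 -hskew capmxS ?capmxSr.
have rM : \rank M = 2%N.
  have h1 := mxrank_sum_cap W Gam.
  have h2 : (\rank (W + Gam)%MS <= r + 3)%N.
    rewrite -rOG mxrankS // addsmx_sub addsmxSr andbT addsmx_sub addsmxSl.
    exact: sLOG.
  have h3 : (\rank (Om + M)%MS <= \rank W)%N.
    by rewrite mxrankS // addsmx_sub addsmxSl capmxSl.
  rewrite rank_skew // in h3.
  rewrite -/M rW hGam in h1; lia.
have lM : is_line <<M>>%MS by rewrite /is_line /is_psub genmx_id eqxx mxrank_gen rM.
have sMG : (<<M>> <= Gam)%MS by rewrite genmxE capmxSr.
have /negP := hBnt _ lM sMG; apply.
apply/forallP => Y; apply/implyP => pY; apply/implyP => sYM.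
rewrite genmxE sub_capmx in sYM; case/andP: sYM => YW YG.
move: (pY) => /andP[_ /eqP rY].
have OY0 : (Om :&: Y)%MS = 0.
  by apply/eqP; rewrite -submx0 -hskew capmxS.
have rOY : \rank (Om + Y)%MS = (r + 1)%N by rewrite rank_skew // rY.
set C := ((Om + Y) :&: L)%MS.
have rC : (1 <= \rank C)%N.
  have h1 := mxrank_sum_cap (Om + Y)%MS L.
  have h2 : (\rank (Om + Y + L)%MS <= r + 2)%N.
    rewrite -rW mxrankS // addsmx_sub addsmxSr andbT addsmx_sub addsmxSl.
    exact: YW.
  rewrite -/C rOY rL in h1; lia.
have [i nz] : exists i, row i C != 0.
  by apply: exists_nz_row; rewrite -mxrank_eq0 -lt0n.
set v := row i C.
have vC : (v <= C)%MS by exact: row_sub.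
rewrite sub_capmx in vC; case/andP: vC => vOY vL.
have [R RB sXR] := ptK v nz vL.
have [pR sRG] := hBp R RB.
have nvO : ~~ (<<v>> <= Om)%MS.
  rewrite genmxE; apply: contra nz => vO.
  by rewrite -submx0 -hLO sub_capmx vL vO.
have OX0 : (Om :&: <<v>>)%MS = 0.
  by apply: skew_rank1 => //; rewrite mxrank_gen rank_rV nz.
have rOX : \rank (Om + <<v>>)%MS = (r + 1)%N by rewrite rank_skew // mxrank_gen rank_rV nz.
have sOXY : (Om + <<v>> <= Om + Y)%MS by rewrite addsmx_sub addsmxSl genmxE vOY.
have sOYX : (Om + Y <= Om + <<v>>)%MS by apply: sub_rank_eq => //; rewrite rOX rOY.
have sYR : (Y <= Om + R)%MS.
  apply: submx_trans (addsmxSr Om Y) _; apply: submx_trans sOYX _.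
  by rewrite addsmx_sub addsmxSl sXR.
have sYR' : (Y <= R)%MS.
  have e := matrix_modl Om sRG; rewrite hskew in e.
  have h : (Y <= (R + Om) :&: Gam)%MS by rewrite sub_capmx YG andbT addsmxC.
  by move: h; rewrite -e addsmx0.
by rewrite (psub_eq _ _ _ pY pR sYR').
Qed.
End H.

Theorem lemma5p9 (F : finFieldType) (q n t : nat) (hq : #|F| = q) (ht : (1 <= t)%N)
  (Om Gam : 'M[F]_n) (B : {set 'M[F]_n})
  (hOm : \rank Om = (t - 1)%N) (hGam : \rank Gam = 3%N)
  (hskew : (Om :&: Gam)%MS = 0)
  (hB : minimal_blocking_set Gam B) (hBnt : nontrivial_bset Gam B) :
  forall P : 'M[F]_n, P \in cone Om B -> ~~ (P <= Om)%MS ->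
    #|lines_through_in P (cone Om B)| = ((q ^ (t - 1) - 1) %/ (q - 1))%N.
Proof.
move=> P PK nPO.
have [[hBp _] _] := hB.
move: (PK); rewrite inE => /andP[pP /existsP[Q /andP[QB sPOQ]]].
have [pQ sQG] := hBp Q QB.
move: (pQ) => /andP[_ /eqP rQ]; move: (pP) => /andP[_ /eqP rP].
have OQ0 : (Om :&: Q)%MS = 0 by apply/eqP; rewrite -submx0 -hskew capmxS.
have rS : \rank (Om + Q)%MS = t by rewrite rank_skew // hOm rQ; lia.
have -> : lines_through_in P (cone Om B) =
    [set L : 'M[F]_n | is_psub 2 L && (P <= L)%MS && (L <= Om + Q)%MS].
  apply/setP => L; rewrite !inE; apply/idP/idP.
    case/andP => /andP[lL sPL] inL.
    apply/andP; split; first exact/andP.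
    exact: (@geom _ _ Om Gam B hGam hskew hBp hBnt P Q L pP nPO QB sPOQ lL sPL inL).
  case/andP => /andP[lL sPL] sLS.
  apply/andP; split; first exact/andP.
  apply/forallP => X; apply/implyP => pX; apply/implyP => sXL.
  rewrite inE pX /=; apply/existsP; exists Q; rewrite QB /=.
  exact: submx_trans sXL sLS.
have := @count_ext _ _ (Om + Q)%MS P 1 rP sPOQ; rewrite rS hq.
have q2 : (1 < q)%N by rewrite -hq card_finNzRing_gt1.
move: ht hOm rS; case: t => // t' _ _ _.
rewrite subSS subn0.
have e1 : (q ^ 2 - q ^ 1 = q * (q - 1))%N by rewrite mulnBr muln1 !expnS expn0 !muln1.
have e2 : (q ^ t'.+1 - q ^ 1 = q * (q ^ t' - 1))%N by rewrite mulnBr muln1 expnS expn1.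
rewrite e1 e2 mulnCA => /eqP; rewrite eqn_pmul2l ?(ltnW q2) // => /eqP <-.
by rewrite mulnK // subn_gt0.
Qed.
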